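(* Let $q\in(0,1]$. Then $\mathrm{F\o l}^{\mathrm{inn}}(R(SU_q(2)))=1-q^2$ and $\mathrm{F\o l}(R(SU_q(2)))=q^{-2}-q^2$.
   Context: $R(SU_q(2))$ is the fusion algebra with irreducible objects $I=\mathbb{Z}_+=\{0,1,2,\dots\}$, unit $0$, trivial involution $\bar n=n$, product $m\cdot n=\sum_{k\in\{|m-n|,|m-n|+2,\dots,m+n\}}k$, and dimension function $d(n)=[n+1]_q$, where $[x]_q=\frac{q^{-x}-q^x}{q^{-1}-q}$ for $0<q<1$ and $[x]_1=x$. Write $\beta\subseteq r$ if $\beta$ has nonzero coefficient in $r$; $\mathrm{supp}(r)$ is the set of such $\beta$. For $A\subseteq I$, $|A|=\sum_{\beta\in A}d(\beta)^2$ and $A^c=I\setminus A$. A finite generating set is a finite $X\subseteq I$ (closed under the involution) such that every element of $I$ is contained in some product of elements of $X$. For finite $X,A\subseteq I$: $\partial_X(A)=\{\beta\in A:\exists x\in X,\ \mathrm{supp}(\beta x)\not\subseteq A\}\cup\{\beta\in A^c:\exists x\in X,\ \mathrm{supp}(\beta x)\not\subseteq A^c\}$ and $\partial^{\mathrm{inn}}_X(A)=\{\beta\in A:\exists x\in X,\ \mathrm{supp}(\beta x)\not\subseteq A\}$. Then $\mathrm{F\o l}_X=\inf_A|\partial_X A|/|A|$ and $\mathrm{F\o l}^{\mathrm{inn}}_X=\inf_A|\partial^{\mathrm{inn}}_X A|/|A|$ over nonempty finite $A\subseteq I$, and $\mathrm{F\o l}$, $\mathrm{F\o l}^{\mathrm{inn}}$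 are the infima of these over all finite generating sets $X$. *)

(* Defs.v *)
From HB Require Import structures.
From mathcomp Require Import all_boot all_order all_algebra.
From mathcomp Require Import all_classical all_reals.
Set Implicit Arguments. Unset Strict Implicit. Unset Printing Implicit Defensive.
Import Order.TTheory GRing.Theory Num.Theory.
Local Open Scope ring_scope.

(* Finite subsets of I = nat are represented by sequences (read as sets:
   membership; duplicates are irrelevant since we sum over [undup]). *)

(* support of the fusion product m.n in R(SU_q(2)):
   {|m-n|, |m-n|+2, ..., m+n} *)
Definition fus (m n : nat) : seq nat :=
  [seq (maxn m n - minn m n + 2 * i)%N | i <- iota 0 (minn m n).+1].

(* support of the product x_1 ... x_k of a list of irreducibles
   (empty product = unit 0); all coefficients are nonnegative, so the
   support of a product is the union of the supports *)
Fixpoint psupp (s : seq nat) : seq nat :=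
  match s with
  | [::] => [:: 0%N]
  | x :: s' => undup (flatten [seq fus k x | k <- psupp s'])
  end.

(* finite generating set: finite X (closed under the trivial involution)
   such that every element of I is in the support of some product of
   elements of X *)
Definition gen_set (X : seq nat) : Prop :=
  forall n : nat, exists s : seq nat, all (mem X) s /\ n \in psupp s.

Section Dims.
Variable R : realType.

Definition qint (q : R) (x : nat) : R :=
  if q == 1 then x%:R else (q ^- x - q ^+ x) / (q^-1 - q).

Definition dimq (q : R) (n : nat) : R := qint q n.+1.

Definition qsize (q : R) (A : seq nat) : R :=
  \sum_(b <- undup A) dimq q b ^+ 2.

Definition inner_bd (X A : seq nat) : seq nat :=
  [seq b <- undup A | has (fun x => ~~ all (mem A) (fus b x)) X].

(* outer part: b in A^c such that supp(b x) is not contained in A^c,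
   i.e. meets A.  Such b satisfy b <= max A + max X, so enumerating
   0 .. max A + max X lists all of them. *)
Definition outer_bd (X A : seq nat) : seq nat :=
  [seq b <- iota 0 (\max_(a <- A) a + \max_(x <- X) x).+1
     | (b \notin A) && has (fun x => has (mem A) (fus b x)) X].

Definition bd_size (q : R) (X A : seq nat) : R :=
  qsize q (inner_bd X A) + qsize q (outer_bd X A).
Definition inn_bd_size (q : R) (X A : seq nat) : R :=
  qsize q (inner_bd X A).

Local Open Scope classical_set_scope.

Definition FolX (q : R) (X : seq nat) : R :=
  inf [set r | exists A : seq nat, A != [::] /\ r = bd_size q X A / qsize q A].
Definition FolinnX (q : R) (X : seq nat) : R :=
  inf [set r | exists A : seq nat, A != [::] /\ r = inn_bd_size q X A / qsize q A].

Definition Fol (q : R) : R := inf [set FolX q X | X in gen_set].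
Definition Folinn (q : R) : R := inf [set FolinnX q X | X in gen_set].

End Dims.

(* Main.v *)
Require Import Defs.
From mathcomp Require Import all_boot all_order all_algebra.
From mathcomp Require Import all_classical all_reals.
From mathcomp Require Import ring lra zify.
Import Order.TTheory GRing.Theory Num.Theory.
Local Open Scope ring_scope.


Lemma fus_sum m n : (m + n)%N \in fus m n.
Proof.
apply/mapP; exists (minn m n); first by rewrite mem_iota /= add0n ltnS leqnn.
rewrite /maxn /minn; case: ltnP => ?; lia.
Qed.

Lemma fus_diff m n : (n <= m)%N -> (m - n)%N \in fus m n.
Proof.
move=> h; apply/mapP; exists 0%N; first by rewrite mem_iota.
rewrite /maxn /minn; case: ltnP => ?; lia.
Qed.

Lemma fus_le {m n k} : k \in fus m n -> (k <= m + n)%N.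
Proof.
move/mapP => [i]; rewrite mem_iota add0n ltnS => /andP [_ hi] ->.
move: hi; rewrite /maxn /minn; case: ltnP => ?; lia.
Qed.

Lemma fus_ge {m n k} : k \in fus m n -> (maxn m n - minn m n <= k)%N.
Proof. by move/mapP => [i _ ->]; apply: leq_addr. Qed.

Fixpoint up (A : seq nat) (x b fuel : nat) : nat :=
  match fuel with
  | 0 => b
  | S n => if (b + x)%N \in A then up A x (b + x) n else b
  end.

Lemma max_ge {A : seq nat} {a} : a \in A -> (a <= \max_(c <- A) c)%N.
Proof. by move=> h; apply: (@leq_bigmax_seq _ A xpredT (fun c => c) a h). Qed.

Lemma up_props A x b fuel : (0 < x)%N -> b \in A ->
  (\max_(a <- A) a < fuel + b)%N ->
  [/\ up A x b fuel \in A, (b <= up A x b fuel)%N & (up A x b fuel + x)%N \notin A].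
Proof.
move=> x0; elim: fuel b => [|n IH] b bA hm /=.
  by have := leq_ltn_trans (max_ge bA) hm; rewrite add0n ltnn.
case: ifP => hb; last by rewrite leqnn hb.
have hm' : (\max_(a <- A) a < n + (b + x))%N.
  by apply: leq_trans hm _; lia.
have [h1 h2 h3] := IH _ hb hm'.
split => //; lia.
Qed.

Lemma psupp0 s : all (fun x => x == 0%N) s -> psupp s = [:: 0%N].
Proof. by elim: s => [|x s IH] //= /andP [/eqP -> /IH ->]. Qed.

Lemma gen_pos X : gen_set X -> exists2 x, x \in X & (0 < x)%N.
Proof.
move=> H; have [s [hs h1]] := H 1%N.
case: (boolP (all (fun x => x == 0%N) s)) => [/psupp0 e|]; first by rewrite e in h1.
move/allPn => [x xs nx]; exists x; first exact: (allP hs).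
by rewrite lt0n.
Qed.

Lemma gen1 : gen_set [:: 1%N].
Proof.
move=> n; exists (nseq n 1%N); split; first by rewrite all_nseq /= orbT.
elim: n => [|n IH] //=.
rewrite mem_undup; apply/flattenP; exists (fus n 1).
  by apply/mapP; exists n.
by rewrite -addn1 fus_sum.
Qed.

Section Comb.
Variable R : realType.

Lemma sub_sum (s t : seq nat) (w : nat -> R) :
  uniq s -> {subset s <= t} -> uniq t -> (forall i, 0 <= w i) ->
  \sum_(i <- s) w i <= \sum_(i <- t) w i.
Proof.
move=> us st ut w0.
have pe : perm_eq s [seq i <- t | i \in s].
  apply: uniq_perm => //; first exact: filter_uniq.
  by move=> i; rewrite mem_filter; case Hi: (i \in s) => //=; rewrite st.
rewrite (perm_big _ pe) big_filter [X in _ <= X](bigID (mem s)) /= lerDl.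
exact: sumr_ge0.
Qed.

Lemma fiber (s t : seq nat) (f : nat -> nat) (w : nat -> R) (c : R) :
  uniq t -> {in s, forall i, f i \in t} ->
  (forall j, j \in t -> c * \sum_(i <- s | f i == j) w i <= w j) ->
  c * \sum_(i <- s) w i <= \sum_(j <- t) w j.
Proof.
move=> ut ft hb.
have E : \sum_(i <- s) w i = \sum_(j <- t) \sum_(i <- s | f i == j) w i.
  transitivity (\sum_(i <- s) \sum_(j <- t | f i == j) w i).
    rewrite big_seq [RHS]big_seq; apply: eq_bigr => i Hi.
    rewrite big_const_seq.
    have -> : count (fun j => f i == j) t = 1%N.
      by rewrite (eq_count (a2 := pred1 (f i))) ?count_uniq_mem ?ft // => j /=; rewrite eq_sym.
    by rewrite /= addr0.
  under eq_bigr do rewrite big_mkcond.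
  rewrite exchange_big; apply: eq_bigr => j _.
  by rewrite [RHS]big_mkcond.
rewrite E mulr_sumr big_seq [X in _ <= X]big_seq.
by apply: ler_sum => j Hj; apply: hb.
Qed.
End Comb.
Section Q.
Variable R : realType.
Variable q : R.
Hypothesis hq0 : 0 < q.
Hypothesis hq1 : q <= 1.

Local Notation D := (dimq q).

Lemma q_neq0 : q != 0. Proof. by rewrite gt_eqF. Qed.

Lemma qinv_neq (hq : q != 1) : q^-1 - q != 0.
Proof.
apply/negP => /eqP h.
have h1 : q^-1 = q by apply/eqP; rewrite -subr_eq0 h.
have : q * q = 1 by rewrite -{1}h1 mulVf // q_neq0.
have hl : q < 1 by rewrite lt_neqAle hq hq1.
clear h h1 => hqq. have h2 : 0 < q * (1 - q) by apply: mulr_gt0 => //; rewrite subr_gt0. lra.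
Qed.

Lemma qsq_lt1 (hq : q != 1) : q * q < 1.
Proof.
have hl : q < 1 by rewrite lt_neqAle hq hq1.
have h2 : 0 < q * (1 - q) by apply: mulr_gt0 => //; rewrite subr_gt0.
rewrite mulrBr mulr1 in h2; lra.
Qed.

Lemma D0 : D 0 = 1.
Proof.
rewrite /dimq /qint; case: ifPn => [_|hq]; first by [].
by rewrite expr1 divff // qinv_neq //; apply/eqP.
Qed.

Lemma Drec n : D n.+1 = q^-1 * D n + q ^+ n.+1.
Proof.
rewrite /dimq /qint; case: ifPn => [/eqP ->|hq].
  by rewrite invr1 expr1n mul1r -[in LHS]addn1 natrD.
have hc := qinv_neq hq.
rewrite [q ^+ n.+2]exprS.
have hp : q ^+ n.+1 != 0 by rewrite expf_neq0 // q_neq0.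
have := q_neq0 => hq0'.
field.
rewrite hp hq0' andbT /=; apply/eqP => h; have := qsq_lt1 hq; lra.
Qed.

Lemma pq : q^-1 * q = 1. Proof. by rewrite mulVf // q_neq0. Qed.
Lemma p_ge1 : 1 <= q^-1.
Proof. by rewrite invr_ge1 // unitfE q_neq0. Qed.
Lemma qn_gt0 n : 0 < q ^+ n. Proof. exact: exprn_gt0. Qed.
Lemma qn_le1 n : q ^+ n <= 1. Proof. by apply: exprn_ile1 => //; apply: ltW. Qed.

Lemma Dpos n : 0 < D n.
Proof.
elim: n => [|n IH]; first by rewrite D0.
rewrite Drec; apply: addr_gt0; last exact: qn_gt0.
by apply: mulr_gt0 => //; rewrite invr_gt0.
Qed.

Lemma Dq n : q * D n.+1 = D n + q ^+ n.+2.
Proof. by rewrite Drec mulrDr mulrA mulfV ?q_neq0 // mul1r -exprS. Qed.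

Lemma p_q_ge2 : 2 <= q^-1 + q.
Proof.
have h := pq; have hp := p_ge1.
have h1q : 0 <= 1 - q by rewrite subr_ge0.
have : 0 <= q^-1 * ((1 - q) * (1 - q)) by apply: mulr_ge0; [apply: le_trans hp | apply: mulr_ge0].
have -> : q^-1 * ((1 - q) * (1 - q)) = q^-1 - 2 * (q^-1 * q) + (q^-1 * q) * q by ring.
rewrite h; lra.
Qed.

Lemma Dstep n : 1 <= D n.+1 - D n.
Proof.
elim: n => [|n IH].
  rewrite Drec D0 mulr1 expr1 -addrA; have := p_q_ge2; lra.
rewrite [D n.+2]Drec [D n.+1]Drec.
set h := D n.+1 - D n in IH *.
have e : q^-1 * (q^-1 * D n + q ^+ n.+1) + q ^+ n.+2 - (q^-1 * D n + q ^+ n.+1)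
   = q^-1 * (q^-1 * D n + q ^+ n.+1 - D n) + q * q ^+ n.+1 - q ^+ n.+1 by rewrite [q ^+ n.+2]exprS; ring.
rewrite e -Drec -/h.
have hp := p_ge1; have h2 := p_q_ge2.
have a1 := qn_le1 n.+1; have a0 := qn_gt0 n.+1.
have : q^-1 <= q^-1 * h by rewrite -{1}[q^-1]mulr1 ler_pM2l //; lra.
have : q * q ^+ n.+1 - q ^+ n.+1 >= q - 1.
  have : 0 <= (1 - q) * (1 - q ^+ n.+1) by apply: mulr_ge0; rewrite subr_ge0 // .
  nra.
lra.
Qed.

Lemma Dge n : n.+1%:R <= D n.
Proof.
elim: n => [|n IH]; first by rewrite D0.
have := Dstep n; rewrite -[n.+2]addn1 natrD; lra.
Qed.

Lemma qD n : q ^+ n * D n <= n.+1%:R.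
Proof.
elim: n => [|n IH]; first by rewrite D0 expr0 mulr1.
have e : q ^+ n.+1 * D n.+1 = q ^+ n * D n + q ^+ n.+1 * q ^+ n.+1.
  rewrite [in LHS]exprSr -mulrA Dq mulrDr -!exprD; congr (_ + _ ^+ _); lia.
rewrite e -[n.+2]addn1 natrD.
have : q ^+ n.+1 * q ^+ n.+1 <= 1 by rewrite -expr2 exprn_ile1 // ?exprn_ge0 ?qn_le1 // ltW.
lra.
Qed.

Definition S m := \sum_(0 <= i < m) D i ^+ 2.

Lemma SS m : S m.+1 = S m + D m ^+ 2.
Proof. by rewrite /S big_nat_recr. Qed.
Lemma S0 : S 0 = 0. Proof. by rewrite /S big_geq. Qed.

Lemma innerS n : (1 - q * q) * S n.+1 <= D n ^+ 2.
Proof.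
elim: n => [|n IH].
  rewrite SS S0 D0 add0r expr1n mulr1; have := mulr_gt0 hq0 hq0; lra.
rewrite SS mulrDr.
have : D n ^+ 2 <= q * q * D n.+1 ^+ 2.
  have -> : q * q * D n.+1 ^+ 2 = (q * D n.+1) ^+ 2 by rewrite exprMn expr2.
  by rewrite Dq lerXn2r ?nnegrE ?addr_ge0 ?ltW ?Dpos ?qn_gt0 // ltrDl qn_gt0.
rewrite [(1 - q * q) * D n.+1 ^+ 2]mulrBl mul1r; lra.
Qed.

Lemma outerS n : (q^-1 * q^-1 - 1) * S n <= D n ^+ 2.
Proof.
case: n => [|n]; first by rewrite S0 mulr0 exprn_ge0 // ltW // Dpos.
have e : q^-1 * q^-1 - 1 = q^-1 * q^-1 * (1 - q * q).
  by rewrite mulrBr mulr1 -mulrA [q^-1 * (q * q)]mulrA pq mul1r pq.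
rewrite e -mulrA.
have hp := p_ge1.
apply: (le_trans (y := q^-1 * q^-1 * D n ^+ 2)).
  by rewrite ler_pM2l ?innerS //; nra.
have -> : q^-1 * q^-1 * D n ^+ 2 = (q^-1 * D n) ^+ 2 by rewrite exprMn expr2.
rewrite Drec lerXn2r ?nnegrE ?addr_ge0 ?ltW ?Dpos ?qn_gt0 ?mulr_ge0 //; try lra.
- by rewrite mulr_gt0 ?Dpos // (lt_le_trans ltr01 hp).
- by rewrite mulr_gt0 ?Dpos // (lt_le_trans ltr01 hp).
- by rewrite ltrDl qn_gt0.
Qed.

Lemma Sgrowth n : n.+1%:R ^+ 3 <= 3 * S n.+1.
Proof.
elim: n => [|n IH]; first by rewrite SS S0 D0 add0r !expr1n mulr1; lra.
rewrite SS mulrDr.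
have h := Dge n.+1.
have : n.+2%:R ^+ 2 <= D n.+1 ^+ 2.
  rewrite lerXn2r ?nnegrE ?ler0n //; by [apply: ltW; apply: Dpos].
rewrite -(addn1 n.+1) natrD. rewrite -(addn1 n) natrD in IH *.
set x := n%:R. have : 0 <= x by rewrite ler0n.
nra.
Qed.

Lemma ebound n : D n ^+ 2 - (1 - q * q) * S n.+1 <= n.+1%:R ^+ 2.
Proof.
elim: n => [|n IH].
  rewrite SS S0 D0 add0r !expr1n mulr1; have := mulr_ile1 (ltW hq0) (ltW hq0) hq1 hq1; lra.
rewrite SS mulrDr.
have e : D n.+1 ^+ 2 - (1 - q * q) * S n.+1 - (1 - q * q) * D n.+1 ^+ 2
  = (D n ^+ 2 - (1 - q * q) * S n.+1) + ((q * D n.+1) ^+ 2 - D n ^+ 2) by ring.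
rewrite opprD addrA e Dq.
have h1 : q ^+ n.+2 * D n <= n.+1%:R.
  apply: le_trans (qD n); rewrite ler_pM2r ?Dpos // !exprS mulrA.
  rewrite -{2}[q ^+ n]mul1r ler_pM2r ?qn_gt0 //; exact: mulr_ile1 (ltW hq0) (ltW hq0) hq1 hq1.
have h2 : q ^+ n.+2 * q ^+ n.+2 <= 1 by rewrite -expr2 exprn_ile1 // ?exprn_ge0 ?qn_le1 // ltW.
have -> : (D n + q ^+ n.+2) ^+ 2 - D n ^+ 2 = 2 * (q ^+ n.+2 * D n) + q ^+ n.+2 * q ^+ n.+2 by ring.
have E1 : (n.+1%:R : R) = n%:R + 1 by rewrite mulrSr.
have E2 : (n.+2%:R : R) = n%:R + 1 + 1 by rewrite !mulrSr.
rewrite E2; rewrite E1 in IH h1.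
move: IH; rewrite !expr2 => IH; lra.
Qed.

Lemma obound n : D n.+1 ^+ 2 - q^-1 * q^-1 * D n ^+ 2 <= 2 * n.+1%:R + 1.
Proof.
rewrite Drec.
have -> : (q^-1 * D n + q ^+ n.+1) ^+ 2 - q^-1 * q^-1 * D n ^+ 2
  = 2 * ((q^-1 * q ^+ n.+1) * D n) + q ^+ n.+1 * q ^+ n.+1 by ring.
have hb : q^-1 * q ^+ n.+1 = q ^+ n by rewrite exprS mulrA pq mul1r.
rewrite hb.
have h2 : q ^+ n.+1 * q ^+ n.+1 <= 1 by rewrite -expr2 exprn_ile1 // ?exprn_ge0 ?qn_le1 // ltW.
have := qD n; lra.
Qed.

Lemma S_gt0 n : 0 < S n.+1.
Proof. rewrite SS; apply: ltr_wpDl; last by rewrite exprn_gt0 // Dpos.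
elim: n => [|n IH]; first by rewrite S0. by rewrite SS addr_ge0 // exprn_ge0 // ltW // Dpos. Qed.

Lemma asym eps : 0 < eps -> exists N : nat,
  (D N ^+ 2 <= (1 - q * q + eps) * S N.+1) /\ (D N ^+ 2 + D N.+1 ^+ 2 <= (q^-1 * q^-1 - q * q + eps) * S N.+1).
Proof.
move=> he.
set P := q^-1 * q^-1.
have hP : 1 <= P by have := p_ge1; rewrite /P; nra.
set C := 4 + P.
set N := Num.truncn (3 * C / eps).
exists N.
have hx := truncnS_gt (3 * C / eps); rewrite -/N in hx.
set x := N.+1%:R in hx *.
have hx1 : 1 <= x by rewrite /x ler1n.
have hex : 3 * C < eps * x.
  by rewrite -ltr_pdivrMl // mulrC.
have hE := ebound N; have hO := obound N; have hG := Sgrowth N.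
rewrite -/x in hE hO hG.
set Sx := S N.+1 in hE hO hG *.
have hS : 0 < Sx := S_gt0 N.
have hxx : x <= x ^+ 2 by rewrite expr2 ler_peMl //; lra.
have k1 : 3 * C * x ^+ 2 <= eps * x * x ^+ 2.
  rewrite ler_pM2r ?exprn_gt0 //; try lra.
have k2 : eps * x ^+ 3 <= eps * (3 * Sx) by rewrite ler_pM2l.
have k3 : eps * x * x ^+ 2 = eps * x ^+ 3 by rewrite -mulrA -exprS.
have k : C * x ^+ 2 <= eps * Sx by lra.
have hm : P * D N ^+ 2 <= P * ((1 - q * q) * Sx + x ^+ 2) by rewrite ler_pM2l; lra.
have id1 : P * ((1 - q * q) * Sx + x ^+ 2) = P * Sx - (q^-1 * q) * (q^-1 * q) * Sx + P * x ^+ 2.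
  by rewrite /P; ring.
rewrite id1 pq mulr1 mul1r in hm.
rewrite /C mulrDl in k.
have e1 : (1 - q * q) * Sx = Sx - q * q * Sx by ring.
have e2 : (1 - q * q + eps) * Sx = Sx - q * q * Sx + eps * Sx by ring.
have e3 : (P - q * q + eps) * Sx = P * Sx - q * q * Sx + eps * Sx by ring.
have e4 : q^-1 / q * D N ^+ 2 = P * D N ^+ 2 by [].
rewrite e1 in hE; rewrite e4 in hO; rewrite e2 e3.
have p1 : 0 <= P * x ^+ 2 by apply: mulr_ge0; lra.
split; lra.
Qed.
Lemma w0 i : 0 <= D i ^+ 2. Proof. exact: sqr_ge0. Qed.

Lemma c_inn : 0 <= 1 - q * q.
Proof. have := mulr_ile1 (ltW hq0) (ltW hq0) hq1 hq1; lra. Qed.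

Lemma c_out : 0 <= q^-1 * q^-1 - 1.
Proof. have h := p_ge1; rewrite subr_ge0; have := mulr_ege1 h h; by []. Qed.

Lemma fP {A x b} : (0 < x)%N -> b \in A ->
  [/\ up A x b (\max_(a <- A) a).+1 \in A, (b <= up A x b (\max_(a <- A) a).+1)%N
    & (up A x b (\max_(a <- A) a).+1 + x)%N \notin A].
Proof. by move=> x0 bA; apply: up_props => //; rewrite addSn ltnS leq_addr. Qed.

Lemma inner_lb {X} A : gen_set X -> (1 - q * q) * qsize q A <= qsize q (inner_bd X A).
Proof.
move=> /gen_pos [x xX x0].
set f := fun b => up A x b (\max_(a <- A) a).+1.
rewrite /qsize [undup (inner_bd X A)]undup_id; last exact: filter_uniq (undup_uniq A).
apply: (@fiber _ _ _ f).
- exact: filter_uniq (undup_uniq A).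
- move=> i; rewrite mem_undup => iA; have [h1 h2 h3] := fP x0 iA.
  rewrite mem_filter mem_undup h1 andbT; apply/hasP; exists x => //.
  by apply/allPn; exists (f i + x)%N => //; exact: fus_sum.
- move=> j _; apply: le_trans (innerS j); rewrite ler_wpM2l ?c_inn //.
  rewrite -big_filter /S; apply: sub_sum => //.
  + exact: filter_uniq (undup_uniq A).
  + move=> i; rewrite mem_filter mem_undup => /andP [/eqP fi iA].
    have [_ h2 _] := fP x0 iA; have h2' : (i <= f i)%N := h2.
    rewrite mem_index_iota; rewrite fi in h2'; lia.
  + exact: iota_uniq.
  + exact: w0.
Qed.

Lemma outer_lb {X} A : gen_set X -> (q^-1 * q^-1 - 1) * qsize q A <= qsize q (outer_bd X A).
Proof.
move=> /gen_pos [x xX x0].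
set f := fun b => up A x b (\max_(a <- A) a).+1.
rewrite /qsize [undup (outer_bd X A)]undup_id; last exact: filter_uniq (iota_uniq _ _).
apply: (@fiber _ _ _ (fun b => f b + x)%N).
- exact: filter_uniq (iota_uniq _ _).
- move=> i; rewrite mem_undup => iA; have [h1 h2 h3] := fP x0 iA.
  rewrite mem_filter h3 andTb; apply/andP; split.
    apply/hasP; exists x => //; apply/hasP; exists (f i) => //.
    by have := @fus_diff (f i + x) x (leq_addl (f i) x); rewrite addnK.
  rewrite mem_iota add0n ltnS; apply: leq_add; exact: max_ge.
- move=> j _; apply: le_trans (outerS j); rewrite ler_wpM2l ?c_out //.
  rewrite -big_filter /S; apply: sub_sum => //.
  + exact: filter_uniq (undup_uniq A).
  + move=> i; rewrite mem_filter mem_undup => /andP [/eqP fi iA].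
    have [_ h2 _] := fP x0 iA; have h2' : (i <= f i)%N := h2.
    rewrite mem_index_iota -fi; lia.
  + exact: iota_uniq.
  + exact: w0.
Qed.

Lemma qsize_gt0 A : A != [::] -> 0 < qsize q A.
Proof.
case: A => [//|a A] _.
apply: lt_le_trans (@sub_sum _ [:: a] _ (fun i => D i ^+ 2) _ _ _ w0).
- by rewrite big_seq1 exprn_gt0 // Dpos.
- by [].
- by move=> i; rewrite inE => /eqP ->; rewrite mem_undup mem_head.
- exact: undup_uniq.
Qed.

Lemma ratio_inn X A : gen_set X -> A != [::] ->
  1 - q * q <= inn_bd_size q X A / qsize q A.
Proof. by move=> g nA; rewrite ler_pdivlMr ?qsize_gt0 // inner_lb. Qed.

Lemma ratio_bd X A : gen_set X -> A != [::] ->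
  q^-1 * q^-1 - q * q <= bd_size q X A / qsize q A.
Proof.
move=> g nA; rewrite ler_pdivlMr ?qsize_gt0 // /bd_size.
have h1 := inner_lb A g; have h2 := outer_lb A g.
have -> : (q^-1 * q^-1 - q * q) * qsize q A =
  (1 - q * q) * qsize q A + (q^-1 * q^-1 - 1) * qsize q A by ring.
lra.
Qed.

Lemma qsize_iota N : qsize q (iota 0 N) = S N.
Proof. by rewrite /qsize undup_id ?iota_uniq // /S /index_iota subn0. Qed.

Lemma inner_iota N : qsize q (inner_bd [:: 1%N] (iota 0 N.+1)) <= D N ^+ 2.
Proof.
rewrite /qsize undup_id; last exact: filter_uniq (undup_uniq _).
apply: (le_trans (y := \sum_(i <- [:: N]) D i ^+ 2)); last by rewrite big_seq1.
apply: sub_sum; [exact: filter_uniq (undup_uniq _) | | by [] | exact: w0].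
move=> b; rewrite mem_filter mem_undup mem_iota has_seq1 => /andP [/allPn [k hk kn] hb].
rewrite inE; apply/eqP; have := fus_le hk; move: kn; rewrite -[mem _ k]/(k \in iota 0 N.+1) mem_iota add0n.
move: hb; rewrite add0n => hb hk2 hk3; lia.
Qed.

Lemma outer_iota N : qsize q (outer_bd [:: 1%N] (iota 0 N.+1)) <= D N.+1 ^+ 2.
Proof.
rewrite /qsize undup_id; last exact: filter_uniq (iota_uniq _ _).
apply: (le_trans (y := \sum_(i <- [:: N.+1]) D i ^+ 2)); last by rewrite big_seq1.
apply: sub_sum; [exact: filter_uniq (iota_uniq _ _) | | by [] | exact: w0].
move=> b; rewrite mem_filter has_seq1 => /andP [/andP [hb /hasP [k hk kA]] _].
rewrite inE; apply/eqP; have := fus_ge hk; move: kA hb.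
rewrite -[mem _ k]/(k \in iota 0 N.+1) !mem_iota !add0n.
lia.
Qed.

Local Open Scope classical_set_scope.

Lemma Folinn_eq : Folinn q = 1 - q * q.
Proof.
have lbs : forall X, gen_set X -> lbound [set r | exists A : seq nat,
    A != [::] /\ r = inn_bd_size q X A / qsize q A] (1 - q * q).
  by move=> X g r [A [nA ->]]; exact: ratio_inn.
have lbX : forall X, gen_set X -> 1 - q * q <= FolinnX q X.
  move=> X g; apply: lb_le_inf; last exact: lbs.
  by exists (inn_bd_size q X [:: 0%N] / qsize q [:: 0%N]); exists [:: 0%N].
have le1 : FolinnX q [:: 1%N] <= 1 - q * q.
  apply/ler_addgt0Pr => e he.
  have [N [h1 _]] := asym _ he.
  apply: (le_trans (ge_inf (ex_intro _ _ (lbs _ gen1)) _)).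
    by exists (iota 0 N.+1); split.
  rewrite /inn_bd_size qsize_iota ler_pdivrMr ?S_gt0 //.
  exact: le_trans (inner_iota N) h1.
apply/eqP; rewrite eq_le; apply/andP; split.
  apply: le_trans le1.
  apply: (ge_inf (E := [set FolinnX q X | X in gen_set])).
    by exists (1 - q * q) => r [X g <-]; exact: lbX.
  by exists [:: 1%N] => //; exact: gen1.
apply: lb_le_inf.
  by exists (FolinnX q [:: 1%N]); exists [:: 1%N] => //; exact: gen1.
by move=> r [X g <-]; exact: lbX.
Qed.

Lemma Fol_eq : Fol q = q^-1 * q^-1 - q * q.
Proof.
have lbs : forall X, gen_set X -> lbound [set r | exists A : seq nat,
    A != [::] /\ r = bd_size q X A / qsize q A] (q^-1 * q^-1 - q * q).
  by move=> X g r [A [nA ->]]; exact: ratio_bd.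
have lbX : forall X, gen_set X -> q^-1 * q^-1 - q * q <= FolX q X.
  move=> X g; apply: lb_le_inf; last exact: lbs.
  by exists (bd_size q X [:: 0%N] / qsize q [:: 0%N]); exists [:: 0%N].
have le1 : FolX q [:: 1%N] <= q^-1 * q^-1 - q * q.
  apply/ler_addgt0Pr => e he.
  have [N [_ h2]] := asym _ he.
  apply: (le_trans (ge_inf (ex_intro _ _ (lbs _ gen1)) _)).
    by exists (iota 0 N.+1); split.
  rewrite /bd_size qsize_iota ler_pdivrMr ?S_gt0 //.
  apply: le_trans h2; apply: lerD; [exact: inner_iota | exact: outer_iota].
apply/eqP; rewrite eq_le; apply/andP; split.
  apply: le_trans le1.
  apply: (ge_inf (E := [set FolX q X | X in gen_set])).
    by exists (q^-1 * q^-1 - q * q) => r [X g <-]; exact: lbX.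
  by exists [:: 1%N] => //; exact: gen1.
apply: lb_le_inf.
  by exists (FolX q [:: 1%N]); exists [:: 1%N] => //; exact: gen1.
by move=> r [X g <-]; exact: lbX.
Qed.

End Q.

Theorem proposition4p4 (R : realType) (q : R) (hq0 : 0 < q) (hq1 : q <= 1) :
  Folinn q = 1 - q ^+ 2 /\ Fol q = q ^- 2 - q ^+ 2.
Proof.
rewrite (@Folinn_eq R q hq0 hq1) (@Fol_eq R q hq0 hq1) !expr2 invfM.
by split.
Qed.
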